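(* Let $P$ be a finite poset that has a unit mixed interval representation. Then $\dim(P) \le 3$.
   Context: Posets are finite and reflexive. A unit mixed interval representation of $P$ assigns to each element $x$ a real interval $I_x$ of length $1$ of one of the four forms $[a,a+1]$, $(a,a+1)$, $(a,a+1]$, $[a,a+1)$ (different forms may occur for different elements), such that for distinct $x,y$, $x<y$ in $P$ if and only if $I_x$ and $I_y$ are disjoint and every point of $I_x$ is less than every point of $I_y$. The dimension $\dim(P)$ is the minimum number of linear extensions of $P$ whose intersection is $P$ (i.e. $x<y$ in $P$ iff $x<y$ in each of them). *)

(* Defs.v *)
From mathcomp Require Import all_boot.
From Stdlib Require Import Reals.

Set Implicit Arguments.
Unset Strict Implicit.
Unset Printing Implicit Defensive.

Definition is_poset (T : finType) (le : rel T) : Prop :=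
  reflexive le /\ antisymmetric le /\ transitive le.

Definition lt_of (T : finType) (le : rel T) : rel T :=
  fun x y => (x != y) && le x y.

(* A unit interval of one of the four forms [a,a+1], (a,a+1), (a,a+1], [a,a+1):
   left endpoint a, and whether each end is closed. *)
Record unit_interval := UnitInterval {
  ui_left : R;
  ui_lclosed : bool;
  ui_rclosed : bool }.

Definition in_ui (I : unit_interval) (t : R) : Prop :=
  (if ui_lclosed I then (ui_left I <= t)%R else (ui_left I < t)%R) /\
  (if ui_rclosed I then (t <= ui_left I + 1)%R else (t < ui_left I + 1)%R).

Definition ui_before (I J : unit_interval) : Prop :=
  (forall t, in_ui I t -> in_ui J t -> False) /\
  (forall s t, in_ui I s -> in_ui J t -> (s < t)%R).

Definition unit_mixed_rep (T : finType) (le : rel T) (f : T -> unit_interval) : Prop :=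
  forall x y : T, x <> y -> (lt_of le x y <-> ui_before (f x) (f y)).

Definition has_unit_mixed_rep (T : finType) (le : rel T) : Prop :=
  exists f : T -> unit_interval, unit_mixed_rep le f.

Definition linear_extension (T : finType) (le L : rel T) : Prop :=
  is_poset L /\ total L /\ (forall x y, le x y -> L x y).

Definition dim_le (T : finType) (le : rel T) (k : nat) : Prop :=
  exists m : nat, exists L : 'I_m -> rel T,
    m <= k /\ (forall i, linear_extension le (L i)) /\
    (forall x y : T, lt_of le x y <-> (forall i, lt_of (L i) x y)).

(* Main.v *)
Require Import Defs.
From mathcomp Require Import all_boot.
From Stdlib Require Import Reals.
From Stdlib Require Import Lra Lia ZArith Classical.

Definition rlt (u v : R) : bool := if Rlt_dec u v then true else false.
Definition req (u v : R) : bool := if Req_EM_T u v then true else false.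

Lemma rltP u v : reflect (u < v)%R (rlt u v).
Proof. rewrite /rlt; case: Rlt_dec => ?; by constructor. Qed.
Lemma reqP u v : reflect (u = v) (req u v).
Proof. rewrite /req; case: Req_EM_T => ?; by constructor. Qed.

Fixpoint lexlt (s t : list R) : bool :=
  match s, t with
  | u :: s', v :: t' => rlt u v || (req u v && lexlt s' t')
  | _, _ => false
  end.

Lemma lexlt_irr s : lexlt s s = false.
Proof.
elim: s => [|u s IH] //=; apply/negbTE; apply/negP.
case/orP; first by move/rltP; lra.
by rewrite IH andbF.
Qed.

Lemma lexlt_trans s t u : lexlt s t -> lexlt t u -> lexlt s u.
Proof.
elim: s t u => [|a s IH] [|b t] [|c u] //=.
case/orP=> [/rltP Hab|/andP[/reqP Hab Hst]];
case/orP=> [/rltP Hbc|/andP[/reqP Hbc Htu]].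
- by apply/orP; left; apply/rltP; lra.
- by apply/orP; left; apply/rltP; lra.
- by apply/orP; left; apply/rltP; lra.
- by apply/orP; right; apply/andP; split; [apply/reqP; lra| exact: IH Hst Htu].
Qed.

Arguments lexlt_trans {s t u}.

Lemma lexlt_total s t : size s = size t -> s <> t -> lexlt s t || lexlt t s.
Proof.
elim: s t => [|a s IH] [|b t] //= [] Hsz Hne.
case: (Rtotal_order a b) => [H|[H|H]].
- by rewrite (introT (rltP _ _) H).
- subst b. have Hst : s <> t by move=> E; apply: Hne; rewrite E.
  case/orP: (IH t Hsz Hst) => H.
  + by rewrite H (introT (reqP _ _) (erefl a)) orbT.
  + by rewrite H (introT (reqP _ _) (erefl a)) !orbT.
- by rewrite (introT (rltP _ _) H) orbT.
Qed.

Section Gen.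
Variable T : finType.
Variable key : T -> list R.
Definition Lof : rel T := fun x y => (x == y) || lexlt (key x) (key y).

Lemma lt_of_Lof x y : lt_of Lof x y = lexlt (key x) (key y).
Proof.
rewrite /lt_of /Lof; case: eqP => [->|_] /=; by rewrite ?lexlt_irr.
Qed.

Lemma Lof_poset n : (forall x, size (key x) = n) -> injective key ->
  is_poset Lof /\ total Lof.
Proof.
move=> Hsz Hinj; split; first split; [|split|].
- by move=> x; rewrite /Lof eqxx.
- move=> x y /andP[]; rewrite /Lof.
  case: eqP => [//|Hne] /= H1; case: eqP => [->//|_] /= H2.
  by have := lexlt_trans H1 H2; rewrite lexlt_irr.
- move=> y x z; rewrite /Lof.
  case: eqP => [->//|_] /= H1; case: eqP => [<-|_] /=; first by rewrite H1 orbT.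
  by move=> H2; rewrite (lexlt_trans H1 H2) orbT.
- move=> x y; rewrite /Lof.
  case: eqP => [->|Hne] /=; first by [].
  case: eqP => [E|_] /=; first by rewrite E in Hne.
  apply: lexlt_total; first by rewrite !Hsz.
  by move=> E; apply: Hne; apply: Hinj.
Qed.
End Gen.

Lemma lex4 a1 a2 a3 a4 b1 b2 b3 b4 :
  lexlt [:: a1; a2; a3; a4] [:: b1; b2; b3; b4] <->
  (a1 < b1 \/ (a1 = b1 /\ (a2 < b2 \/ (a2 = b2 /\ (a3 < b3 \/ (a3 = b3 /\ a4 < b4))))))%R.
Proof.
rewrite /=.
split.
- case/orP=> [/rltP|/andP[/reqP ->]]; first by left.
  case/orP=> [/rltP|/andP[/reqP ->]]; first by right; split=> //; left.
  case/orP=> [/rltP|/andP[/reqP ->]]; first by right; split=> //; right; split=> //; left.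
  move=> /orP[/rltP H|/andP[_ //]]; by right; split=> //; right; split=> //; right.
- case=> [/rltP ->//|[-> H]].
  rewrite (introT (reqP _ _) (erefl b1)) /=; apply/orP; right; move: H.
  case=> [/rltP ->//|[-> H]].
  rewrite (introT (reqP _ _) (erefl b2)) /=; apply/orP; right; move: H.
  case=> [/rltP ->//|[-> H]].
  rewrite (introT (reqP _ _) (erefl b3)) /=; apply/orP; right; move: H.
  by move/rltP ->.
Qed.

Section Reals.
Local Open Scope R_scope.

Lemma in_ui_int I t : ui_left I < t < ui_left I + 1 -> in_ui I t.
Proof.
move=> [H1 H2]; rewrite /in_ui.
case: (ui_lclosed I); case: (ui_rclosed I); split; lra.
Qed.

Lemma in_ui_bounds I s : in_ui I s ->
  ui_left I <= s <= ui_left I + 1 /\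
  (ui_rclosed I = false -> s < ui_left I + 1) /\
  (ui_lclosed I = false -> ui_left I < s).
Proof.
rewrite /in_ui; case: (ui_lclosed I); case: (ui_rclosed I) => -[H1 H2];
  repeat split; try lra; done.
Qed.

Lemma before_iff I J : ui_before I J <->
  (ui_left I + 1 < ui_left J \/
   (ui_left I + 1 = ui_left J /\ ~~ (ui_rclosed I && ui_lclosed J))).
Proof.
split.
- move=> [_ H].
  case: (Rlt_or_le (ui_left I + 1) (ui_left J)) => Hc; first by left.
  case: (Rle_lt_or_eq_dec _ _ Hc) => Hc'.
  + exfalso.
    case: (Rle_or_lt (ui_left J) (ui_left I)) => Hd.
    * have := H (ui_left I + /2) (ui_left J + /2).
      have H2 : 0 < /2 < 1 by lra.
      move=> HH; have : ui_left I + / 2 < ui_left J + / 2.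
        by apply: HH; apply: in_ui_int; lra.
      lra.
    * set m := (ui_left J + ui_left I + 1) / 2.
      have : m < m by apply: H; apply: in_ui_int; rewrite /m; lra.
      lra.
  + right; split=> //; apply/negP => /andP[Hr Hl].
    have HI : in_ui I (ui_left I + 1).
      by rewrite /in_ui Hr; split; [case: (ui_lclosed I); lra | lra].
    have HJ : in_ui J (ui_left I + 1).
      by rewrite /in_ui Hl; split; [lra | case: (ui_rclosed J); lra].
    have := H _ _ HI HJ; lra.
- move=> Hc.
  have Hlt : forall s t, in_ui I s -> in_ui J t -> s < t.
    move=> s t /in_ui_bounds [[Hs1 Hs2] [Hs3 Hs4]] /in_ui_bounds [[Ht1 Ht2] [Ht3 Ht4]].
    case: Hc => [Hc|[Hc Hb]]; first lra.
    move: Hb Hs3 Ht4; case: (ui_rclosed I); case: (ui_lclosed J) => //= _ A B.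
    + have := B erefl; lra.
    + have := A erefl; lra.
    + have := A erefl; lra.
  split=> // t H1 H2; have := Hlt _ _ H1 H2; lra.
Qed.
End Reals.

Section Main.
Local Open Scope R_scope.
Variable T : finType.
Variable f : T -> unit_interval.

Definition a x := ui_left (f x).
Definition rc x := ui_rclosed (f x).
Definition lc x := ui_lclosed (f x).
Definition b x : Z := up (a x).
Definition bR x := IZR (b x).
Definition g x := bR x - a x.
Definition G (p : Z) x : Z := ((b x - p) / 2)%Z.
Definition low (p : Z) x : bool := Z.eqb ((b x - p) mod 2) 0.
Definition sub p x : R :=
  if low p x then (if rc x then 2 else 0) else (if lc x then 1 else 3).
Definition rk (x : T) : R := INR (enum_rank x).
Definition key p x := [:: IZR (G p x); - g x; sub p x; rk x].
Definition key3 x := [:: bR x; g x; - sub 0 x; - rk x].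
Definition bef x y := ui_before (f x) (f y).

Lemma bR_bound x : bR x - 1 <= a x < bR x.
Proof. rewrite /bR /b; have [H1 H2] := archimed (a x); lra. Qed.

Lemma befE x y : bef x y <->
  (a x + 1 < a y \/ (a x + 1 = a y /\ ~~ (rc x && lc y))).
Proof. exact: before_iff. Qed.

Lemma bef_blocks x y : bef x y -> (b x < b y)%Z.
Proof.
move/befE=> H; apply: lt_IZR; rewrite -/(bR x) -/(bR y).
have := bR_bound x; have := bR_bound y; case: H => [|[]]; lra.
Qed.

Lemma adj_g x y : b y = (b x + 1)%Z -> a y - a x = 1 + g x - g y.
Proof.
move=> E; rewrite /g /bR E plus_IZR; lra.
Qed.

Arguments adj_g {x y}.

Lemma bef_adj x y : bef x y -> b y = (b x + 1)%Z ->
  g y < g x \/ (g y = g x /\ ~~ (rc x && lc y)).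
Proof.
move=> /befE H E; have := adj_g E; case: H => [|[]]; first by left; lra.
by move=> H1 H2 H3; right; split=> //; lra.
Qed.

Lemma nbef_adj x y : ~ bef x y -> (b x < b y)%Z ->
  b y = (b x + 1)%Z /\ (g x < g y \/ (g x = g y /\ rc x && lc y)).
Proof.
move=> Hn Hlt.
have Hle : a y <= a x + 1.
  case: (Rle_or_lt (a y) (a x + 1)) => // H; exfalso; apply: Hn; apply/befE; by left.
have E : b y = (b x + 1)%Z.
  have : (b y < b x + 2)%Z.
    apply: lt_IZR; rewrite plus_IZR -/(bR x) -/(bR y).
    have := bR_bound x; have := bR_bound y; lra.
  lia.
split=> //; have := adj_g E => Hd.
case: (Rle_lt_or_eq_dec _ _ Hle) => H; first by left; lra.
right; split; first lra.
case: (boolP (rc x && lc y)) => // Hb; exfalso; apply: Hn; apply/befE; by right.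
Qed.

Arguments bef_adj {x y}.
Arguments nbef_adj {x y}.
Arguments bef_blocks {x y}.

Lemma keyA p x y : bef x y -> lexlt (key p x) (key p y).
Proof.
move=> Hxy; have Hb := bef_blocks Hxy; apply/lex4.
have : (G p x <= G p y)%Z by rewrite /G; Z.div_mod_to_equations; lia.
case/Zle_lt_or_eq => HG; first by left; apply: IZR_lt.
right; split; first by rewrite HG.
have E : b y = (b x + 1)%Z by move: HG; rewrite /G; Z.div_mod_to_equations; lia.
have Lx : low p x by apply/Z.eqb_spec; move: HG; rewrite /G; Z.div_mod_to_equations; lia.
have Ly : low p y = false by apply/Z.eqb_spec; move: HG; rewrite /G; Z.div_mod_to_equations; lia.
case: (bef_adj Hxy E) => [H|[H1 H2]]; first by left; lra.
right; split; first by rewrite H1.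
left; rewrite /sub Lx Ly; move: H2; case: (rc x); case: (lc y) => //= _; lra.
Qed.

Lemma key3A x y : bef x y -> lexlt (key3 x) (key3 y).
Proof. move=> H; apply/lex4; left; apply: IZR_lt; exact: bef_blocks. Qed.

Lemma keyB p x y : b y = (b x + 1)%Z -> ((b x - p) mod 2 = 0)%Z ->
  (g x < g y \/ (g x = g y /\ rc x && lc y)) -> lexlt (key p y) (key p x).
Proof.
move=> E Hm H; apply/lex4; right.
split; first by rewrite /G E; f_equal; Z.div_mod_to_equations; lia.
have Lx : low p x by apply/Z.eqb_spec.
have Ly : low p y = false by apply/Z.eqb_spec; rewrite E; Z.div_mod_to_equations; lia.
case: H => [H|[H1 H2]]; first by left; lra.
right; split; first by rewrite H1.
left; rewrite /sub Lx Ly; move/andP: H2 => [-> ->]; lra.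
Qed.

Arguments keyB {p x y}.

Lemma rk_inj x y : rk x = rk y -> x = y.
Proof. by move=> /INR_eq /ord_inj /enum_rank_inj. Qed.

Lemma core x y : x <> y -> ~ bef x y ->
  lexlt (key 0 y) (key 0 x) \/ lexlt (key 1 y) (key 1 x) \/ lexlt (key3 y) (key3 x).
Proof.
move=> Hne Hn.
case: (Z.lt_total (b x) (b y)) => [Hlt|[Heq|Hlt]].
- have [E H] := nbef_adj Hn Hlt.
  have : ((b x - 0) mod 2 = 0)%Z \/ ((b x - 1) mod 2 = 0)%Z.
    by Z.div_mod_to_equations; lia.
  case=> Hm; [left|right; left]; exact: keyB E Hm H.
- have HG : forall p, G p x = G p y by move=> p; rewrite /G Heq.
  have HL : forall p, low p x = low p y by move=> p; rewrite /low Heq.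
  have HbR : bR x = bR y by rewrite /bR Heq.
  have Hs : sub 0 x = sub 0 y -> rc x = rc y \/ True by move=> _; right.
  case: (Rtotal_order (g x) (g y)) => [H|[H|H]].
  + left; apply/lex4; right; split; first by rewrite HG. left; lra.
  + case: (Rtotal_order (sub 0 x) (sub 0 y)) => [H'|[H'|H']].
    * right; right; apply/lex4; right; split=> //; right; split; first by rewrite H.
      left; lra.
    * case: (Rtotal_order (rk x) (rk y)) => [H''|[H''|H'']].
      -- right; right; apply/lex4; right; split=> //; right; split; first by rewrite H.
         right; split; [by rewrite H'|lra].
      -- by case: Hne; apply: rk_inj.
      -- left; apply/lex4; right; split; first by rewrite HG.
         right; split; first by rewrite H.
         right; split; [by rewrite H'|lra].
    * left; apply/lex4; right; split; first by rewrite HG.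
      right; split; [by rewrite H|left; lra].
  + right; right; apply/lex4; right; split=> //; left; lra.
- right; right; apply/lex4; left; exact: IZR_lt.
Qed.

End Main.

Lemma lexlt_asym s t : lexlt s t -> lexlt t s -> False.
Proof. by move=> H1 H2; have := lexlt_trans H1 H2; rewrite lexlt_irr. Qed.

Theorem mainTheorem4 (T : finType) (le : rel T) :
  is_poset le -> has_unit_mixed_rep le -> dim_le le 3.
Proof.
move=> Hpo [f Hf].
pose k0 := key T f 0%Z; pose k1 := key T f 1%Z; pose k3 := key3 T f.
pose L : 'I_3 -> rel T := fun i =>
  match val i with 0 => Lof T k0 | 1 => Lof T k1 | _ => Lof T k3 end.
have inj0 : forall p, injective (key T f p).
  by move=> p x y [] _ _ _ H; apply: rk_inj.
have inj3 : injective k3.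
  by move=> x y [] _ _ _ H; apply: rk_inj; lra.
have bef_lt : forall x y, lt_of le x y -> bef T f x y.
  move=> x y H; have Hne : x <> y by move: H; rewrite /lt_of; case: eqP.
  by apply/(Hf x y Hne).
have lt_bef : forall x y, x <> y -> bef T f x y -> lt_of le x y.
  by move=> x y Hne H; apply/(Hf x y Hne).
have ext : forall k : T -> list R, (forall x, size (k x) = 4) -> injective k ->
    (forall x y, bef T f x y -> lexlt (k x) (k y)) -> linear_extension le (Lof T k).
  move=> k Hs Hi Hk; have [H1 H2] := @Lof_poset T k 4 Hs Hi; split=> //; split=> //.
  move=> x y Hle; rewrite /Lof; case: eqP => //= Hne.
  apply: Hk; apply: bef_lt; rewrite /lt_of Hle andbT; exact/eqP.
exists 3, L; split=> //; split.
- case=> [[|[|[|n]]] Hi] //; rewrite /L /=; apply: ext.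
  + by [].
  + exact: inj0.
  + by move=> x y; apply: keyA.
  + by [].
  + exact: inj0.
  + by move=> x y; apply: keyA.
  + by [].
  + exact: inj3.
  + by move=> x y; apply: key3A.
- move=> x y; split.
  + move=> H; have Hb := bef_lt _ _ H.
    case=> [[|[|[|n]]] Hi] //; rewrite /L /= lt_of_Lof.
    * exact: keyA.
    * exact: keyA.
    * exact: key3A.
  + move=> H.
    have H0 := H (@Ordinal 3 0 isT); have H1 := H (@Ordinal 3 1 isT);
    have H2 := H (@Ordinal 3 2 isT).
    rewrite /L /= !lt_of_Lof in H0 H1 H2.
    have Hne : x <> y by move=> E; move: H0; rewrite E lexlt_irr.
    apply: lt_bef => //.
    case: (Classical_Prop.classic (bef T f x y)) => // Hn; exfalso.
    case: (@core T f x y Hne Hn) => [C|[C|C]]; [exact: lexlt_asym H0 C|exact: lexlt_asym H1 C|exact: lexlt_asym H2 C].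
Qed.
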